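(* Let $\mathscr{H}_3$ be the class of graphs $G$ on at least twelve vertices with $\gamma(G)=2$ and $\operatorname{diam}(\overline{G})\ge 3$. Then $\mathscr{H}_3$ is recognizable: every graph $H$ with $\mathscr{D}(H)=\mathscr{D}(G)$ for some $G\in\mathscr{H}_3$ belongs to $\mathscr{H}_3$.
   Context: All graphs are finite, simple and undirected; $\overline{G}$ is the complement, $\operatorname{diam}$ the diameter (infinite for disconnected graphs) and $\gamma$ the domination number. For a vertex $v$, the card $G-v$ is the unlabeled graph obtained by deleting $v$; the deck $\mathscr{D}(G)$ is the multiset of all cards up to isomorphism. A class of graphs is recognizable if every reconstruction (graph with the same deck) of a member of the class is again a member. *)

(* Defs.v *)
From mathcomp Require Import all_boot all_fingroup.
Set Implicit Arguments. Unset Strict Implicit. Unset Printing Implicit Defensive.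

Definition simple_graph (n : nat) (g : rel 'I_n) : Prop :=
  symmetric g /\ irreflexive g.

Definition compl_graph (n : nat) (g : rel 'I_n) : rel 'I_n :=
  fun i j => (i != j) && ~~ g i j.

Definition card_del (n : nat) (g : rel 'I_n.+1) (v : 'I_n.+1) : rel 'I_n :=
  fun i j => g (lift v i) (lift v j).

Definition graph_iso (m : nat) (g h : rel 'I_m) : Prop :=
  exists f : {perm 'I_m}, forall i j, g i j = h (f i) (f j).

(* Equal decks: the multisets of cards up to isomorphism coincide, i.e. there is
   a bijection of the vertices matching each card of g with an isomorphic card of h. *)
Definition same_deck (n : nat) (g h : rel 'I_n.+1) : Prop :=
  exists s : {perm 'I_n.+1}, forall v, graph_iso (card_del g v) (card_del h (s v)).

Definition dominating (n : nat) (g : rel 'I_n) (D : {set 'I_n}) : Prop :=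
  forall v, v \in D \/ exists2 u, u \in D & g u v.

Definition domination_number_is (n : nat) (g : rel 'I_n) (k : nat) : Prop :=
  (exists D : {set 'I_n}, dominating g D /\ #|D| = k) /\
  (forall D : {set 'I_n}, dominating g D -> k <= #|D|).

(* diam(g) >= d (diameter infinite for disconnected graphs): some pair u, v such
   that every walk from u to v has length at least d (vacuous if none exists). *)
Definition diam_ge (n : nat) (g : rel 'I_n) (d : nat) : Prop :=
  exists u v : 'I_n, forall p : seq 'I_n, path g u p -> last u p = v -> d <= size p.

Definition in_H3 (n : nat) (g : rel 'I_n.+1) : Prop :=
  12 <= n.+1 /\ domination_number_is g 2 /\ diam_ge (compl_graph g) 3.

(* Main.v *)
Require Import Defs.
From mathcomp Require Import all_boot all_fingroup zify.
From Stdlib Require Import ZArith Lia.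
Set Implicit Arguments. Unset Strict Implicit. Unset Printing Implicit Defensive.

Lemma arithZ (M x0 x1 x2 x3 x4 B : Z) : (10 <= M)%Z -> 
  (x1 + M * x0 = 0)%Z -> (2 * x2 + (M-1) * x1 = 0)%Z -> (3 * x3 + (M-2)*x2 = 0)%Z -> (4 * x4 + (M-3)*x3 = 0)%Z ->
  (-B <= x4 <= B)%Z -> (B <= (M+2)*(M+2))%Z -> x0 = 0%Z.
Proof.
intros HM e1 e2 e3 e4 hb hB.
assert (E : (24 * x4 = M*(M-1)*(M-2)*(M-3)*x0)%Z).
{ assert (x1 = - M * x0)%Z by lia. subst x1.
  assert (6 * x3 = - (M-2)*(2*x2))%Z by lia.
  assert (24 * x4 = -6 * (M-3)*x3)%Z by lia.
  rewrite H0. replace (-6 * (M-3) * x3)%Z with (-(M-3) * (6*x3))%Z by ring. rewrite H.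
  replace (2*x2)%Z with (-(M-1)*(-M*x0))%Z by lia. ring. }
destruct (Z.eq_dec x0 0) as [|Hx]; [assumption|exfalso].
assert (P : (M*(M-1)*(M-2)*(M-3) > 24*(M+2)*(M+2))%Z) by nia.
assert (Q : (0 < M*(M-1)*(M-2)*(M-3))%Z) by nia.
destruct (Z_lt_ge_dec x0 0); nia.
Qed.

Lemma arith (N c a0 a1 a2 a3 a4 b0 b1 b2 b3 b4 : nat) :
  12 <= N -> 1 <= c <= 2 ->
  0.+1 * a1 + (N - 0 - c) * a0 = 0.+1 * b1 + (N - 0 - c) * b0 ->
  1.+1 * a2 + (N - 1 - c) * a1 = 1.+1 * b2 + (N - 1 - c) * b1 ->
  2.+1 * a3 + (N - 2 - c) * a2 = 2.+1 * b3 + (N - 2 - c) * b2 ->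
  3.+1 * a4 + (N - 3 - c) * a3 = 3.+1 * b4 + (N - 3 - c) * b3 ->
  a4 <= N * N -> b4 <= N * N -> a0 = b0.
Proof.
move=> HN Hc e1 e2 e3 e4 h1 h2.
set M := N - c.
have HM : 10 <= M by rewrite /M; lia.
have HMN : N <= M + 2 by rewrite /M; lia.
have e1' : 1 * a1 + M * a0 = 1 * b1 + M * b0 by rewrite /M; move: e1; rewrite subn0.
have e2' : 2 * a2 + (M - 1) * a1 = 2 * b2 + (M-1) * b1 by move: e2; rewrite [N - 1 - c]subnAC.
have e3' : 3 * a3 + (M - 2) * a2 = 3 * b3 + (M-2) * b2 by move: e3; rewrite [N - 2 - c]subnAC.
have e4' : 4 * a4 + (M - 3) * a3 = 4 * b4 + (M-3) * b3 by move: e4; rewrite [N - 3 - c]subnAC.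
clearbody M. clear e1 e2 e3 e4.
have := @arithZ (Z.of_nat M) (Z.of_nat a0 - Z.of_nat b0) (Z.of_nat a1 - Z.of_nat b1)
  (Z.of_nat a2 - Z.of_nat b2) (Z.of_nat a3 - Z.of_nat b3) (Z.of_nat a4 - Z.of_nat b4) (Z.of_nat (N*N)).
move=> /(_ ltac:(lia) ltac:(nia) ltac:(nia) ltac:(nia) ltac:(nia) ltac:(nia) ltac:(nia)).
lia.
Qed.

Definition miss m (g : rel 'I_m) (p : 'I_m * 'I_m) : {set 'I_m} :=
  [set z | [&& z != p.1, z != p.2, ~~ g p.1 z & ~~ g p.2 z]].
Definition itm m (b : bool) (g : rel 'I_m) (p : 'I_m * 'I_m) : bool :=
  if b then g p.1 p.2 else p.1 == p.2.
Definition Dk m b (g : rel 'I_m) k : nat :=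
  #|[set p | itm b g p && (#|miss g p| == k)]|.

Lemma Dk_iso m b (g h : rel 'I_m) k : graph_iso g h -> Dk b g k = Dk b h k.
Proof.
case=> f Hf; rewrite /Dk; apply/esym.
pose fp := fun p : 'I_m * 'I_m => (f p.1, f p.2).
have fp_inj : injective fp by move=> [x1 y1] [x2 y2] [/perm_inj -> /perm_inj ->].
rewrite -(card_preimset _ fp_inj); apply: eq_card => p; rewrite !inE.
have Hm : #|miss h (fp p)| = #|miss g p|.
  rewrite -(card_preimset _ (@perm_inj _ f)); apply: eq_card => z.
  by rewrite !inE /= -!Hf !(eqtype.inj_eq (@perm_inj _ f)).
by rewrite /fp in Hm *; rewrite /= Hm /itm /= -Hf (eqtype.inj_eq (@perm_inj _ f)).
Qed.

Lemma Dk_del n b (g : rel 'I_n.+1) w k :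
  Dk b (card_del g w) k =
  #|[set p | [&& itm b g p, w != p.1, w != p.2 & #|miss g p :\ w| == k]]|.
Proof.
pose lp := fun p : 'I_n * 'I_n => (lift w p.1, lift w p.2).
have lp_inj : injective lp by move=> [a1 a2] [b1 b2] E; move: (f_equal fst E) (f_equal snd E) => /= /lift_inj -> /lift_inj ->.
have Hm p : #|miss (card_del g w) p| = #|miss g (lp p) :\ w|.
  rewrite -(card_imset _ (@lift_inj _ w)); apply: eq_card => z.
  rewrite !inE; case: (unliftP w z) => [z'|] ->.
    by rewrite (mem_imset _ _ (@lift_inj _ w)) !inE /= !(eqtype.inj_eq (@lift_inj _ w)) [lift w _ == w]eq_sym neq_lift.
  rewrite eqxx /=; apply/negbTE; apply/imsetP => -[z0 _ E]; by move: (neq_lift w z0); rewrite -E eqxx.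
rewrite /Dk -(card_imset _ lp_inj); apply: eq_card => -[q1 q2]; rewrite inE /=.
case: (unliftP w q1) => [j1|] ->; last first.
  rewrite eqxx /= andbF; apply/negbTE/imsetP => -[[i1 i2] _ E].
  by move: (f_equal fst E) (neq_lift w i1) => /= E1; rewrite -E1 eqxx.
case: (unliftP w q2) => [j2|] ->; last first.
  rewrite eqxx /= !andbF; apply/negbTE/imsetP => -[[i1 i2] _ E].
  by move: (f_equal snd E) (neq_lift w i2) => /= E1; rewrite -E1 eqxx.
rewrite (mem_imset _ (j1, j2) lp_inj) inE Hm !neq_lift /itm /=.
by rewrite (eqtype.inj_eq (@lift_inj _ w)).
Qed.

Lemma card_sumb (T : finType) (P : pred T) : #|[set x | P x]| = \sum_x (P x : nat).
Proof.
rewrite -sum1_card big_mkcond; apply: eq_bigr => x _; rewrite inE; by case: (P x).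
Qed.

Lemma count_w N (S M : {set 'I_N}) (k : nat) : [disjoint M & S] ->
  #|[set w | (w \notin S) && (#|M :\ w| == k)]| =
  (#|M| == k.+1) * k.+1 + (#|M| == k) * (N - k - #|S|).
Proof.
move=> dMS.
have HMS : M :&: S = set0 by apply: disjoint_setI0.
have notS w : w \in M -> w \notin S.
  move=> wM; apply/negP => wS; have : w \in M :&: S by rewrite inE wM wS.
  by rewrite HMS inE.
have Hw w : #|M :\ w| = if w \in M then #|M|.-1 else #|M|.
  by move: (cardsD1 w M); case: (w \in M) => /=; lia.
case E1: (#|M| == k.+1).
  have -> : #|M| == k = false by apply/negbTE/eqP; move/eqP: E1; lia.
  rewrite mul1n mul0n addn0 -(eqP E1); apply: eq_card => w; rewrite inE Hw.
  case wM: (w \in M); first by rewrite notS // (eqP E1) /= eqxx.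
  by rewrite (eqP E1) (gtn_eqF (ltnSn k)) andbF.
case E2: (#|M| == k).
  rewrite mul0n mul1n add0n.
  have -> : [set w | (w \notin S) && (#|M :\ w| == k)] = ~: (M :|: S).
    apply/setP => w; rewrite !inE Hw negb_or andbC.
    case wM: (w \in M); rewrite /= ?andbF //; last by rewrite E2.
    have : 0 < #|M| by apply/card_gt0P; exists w.
    move=> Hpos; have -> : (#|M|.-1 == k) = false.
      rewrite (eqP E2); move: Hpos; rewrite (eqP E2); case: (k) => // k' _; exact: ltn_eqF.
    done.
  have := cardsC (M :|: S); rewrite cardsU HMS cards0 card_ord (eqP E2); lia.
rewrite !mul0n; apply/eqP; rewrite cards_eq0; apply/eqP/setP => w; rewrite !inE Hw.
case: (w \in M); last by rewrite E2 andbF.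
apply: negbTE; apply/negP => /andP[_ /eqP E]; move/eqP: E1; move/eqP: E2; lia.
Qed.

Lemma sum_del n b c (g : rel 'I_n.+1) (k : nat) :
  (forall p, itm b g p -> #|[set p.1; p.2]| = c) ->
  \sum_w Dk b (card_del g w) k = k.+1 * Dk b g k.+1 + (n.+1 - k - c) * Dk b g k.
Proof.
move=> Hc.
under eq_bigr do rewrite Dk_del card_sumb.
rewrite exchange_big /= /Dk !card_sumb !big_distrr -big_split /=.
apply: eq_bigr => p _.
case Hp: (itm b g p); last by rewrite big1 //= ?muln0.
have dis : [disjoint miss g p & [set p.1; p.2]].
  rewrite -setI_eq0; apply/eqP/setP => z; rewrite !inE.
  by case: (z == p.1) (z == p.2) => -[] //=; rewrite !andbF.
rewrite -card_sumb -(Hc p Hp) /= mulnC [_ * (_ == k)]mulnC -(count_w k dis).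
apply: eq_card => w; rewrite !inE negb_or.
by rewrite andbA.
Qed.

Lemma deck_sum n b (G H : rel 'I_n.+1) k : same_deck G H ->
  \sum_w Dk b (card_del G w) k = \sum_w Dk b (card_del H w) k.
Proof.
case=> s Hs; rewrite [RHS](reindex_inj (@perm_inj _ s)) /=.
by apply: eq_bigr => w _; apply: Dk_iso.
Qed.

Lemma Dk_le n b (g : rel 'I_n.+1) k : Dk b g k <= n.+1 * n.+1.
Proof. by rewrite /Dk; apply: leq_trans (max_card _) _; rewrite card_prod card_ord. Qed.

Lemma D0_eq n b c (G H : rel 'I_n.+1) : 11 <= n -> 1 <= c <= 2 ->
  (forall p, itm b G p -> #|[set p.1; p.2]| = c) ->
  (forall p, itm b H p -> #|[set p.1; p.2]| = c) ->
  same_deck G H -> Dk b G 0 = Dk b H 0.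
Proof.
move=> Hn Hc HG HH Hd.
have E k : k.+1 * Dk b G k.+1 + (n.+1 - k - c) * Dk b G k =
           k.+1 * Dk b H k.+1 + (n.+1 - k - c) * Dk b H k.
  by rewrite -(sum_del k HG) -(sum_del k HH) (deck_sum b k Hd).
apply: (@arith n.+1 c _ (Dk b G 1) (Dk b G 2) (Dk b G 3) (Dk b G 4) _
                      (Dk b H 1) (Dk b H 2) (Dk b H 3) (Dk b H 4)) => //; first [exact: Dk_le | exact: E 0 | exact: E 1 | exact: E 2 | exact: E 3].
Qed.

Theorem lemma11 (n : nat) (G H : rel 'I_n.+1) :
  simple_graph G -> simple_graph H -> same_deck G H -> in_H3 G -> in_H3 H.
Proof.
move=> [symG irrG] [symH irrH] Hd [HN [[_ Gdom] [u [v Hdiam]]]].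
have Hn : 11 <= n by [].
have cT (g : rel 'I_n.+1) : irreflexive g -> forall p, itm true g p -> #|[set p.1; p.2]| = 2.
  move=> irr [p1 p2] /= Hg; rewrite cards2; case: eqP => // E.
  by move: Hg; rewrite E irr.
have cF (g : rel 'I_n.+1) : forall p, itm false g p -> #|[set p.1; p.2]| = 1.
  by move=> [p1 p2] /= /eqP ->; rewrite cards2 eqxx.
have ET := D0_eq Hn (isT : 1 <= 2 <= 2) (cT G irrG) (cT H irrH) Hd.
have EF := D0_eq Hn (isT : 1 <= 1 <= 2) (@cF G) (@cF H) Hd.
have uv : u != v.
  apply/negP => /eqP E; by have := Hdiam [::] isT E.
have Guv : G u v.
  apply/negPn/negP => nG; have := Hdiam [:: v] _ erefl.
  by rewrite /= /compl_graph uv nG => /(_ isT).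
have DG : 0 < Dk true G 0.
  apply/card_gt0P; exists (u, v); rewrite inE /itm /= Guv cards_eq0 /=.
  apply/eqP/setP => z; rewrite !inE; apply/negP => /and4P [zu zv nuz nvz].
  have := Hdiam [:: z; v]; rewrite /= /compl_graph eq_sym zu nuz zv (symG z v) nvz.
  by move=> /(_ isT erefl).
have DGF : Dk false G 0 = 0.
  apply/eqP; rewrite cards_eq0; apply/eqP/setP => -[p1 p2]; rewrite !inE /itm /=.
  apply: negbTE; apply/negP => /andP [/eqP e m0]; subst p2.
  have : 2 <= #|[set p1]|; last by rewrite cards1.
  apply: Gdom => w; case: (eqVneq w p1) => [->|wp]; first by left; rewrite inE.
  right; exists p1; first by rewrite inE.
  move: m0; rewrite cards_eq0 => /eqP /setP /(_ w); rewrite !inE wp /= andbb.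
  by case: (G p1 w).
move: DG DGF; rewrite ET EF => /card_gt0P [[x y]]; rewrite inE /itm /= => /andP [Hxy m0] DHF.
have m0' w : [|| w == x, w == y, H x w | H y w].
  move: m0; rewrite cards_eq0 => /eqP /setP /(_ w); rewrite !inE.
  by case: (w == x); case: (w == y); case: (H x w); case: (H y w).
have xy : x != y by apply/negP => /eqP E; move: Hxy; rewrite E irrH.
split=> //; split; [split|].
- exists [set x; y]; split; last by rewrite cards2 xy.
  move=> w; case/or4P: (m0' w) => [/eqP ->|/eqP ->|Hw|Hw].
  + by left; rewrite !inE eqxx.
  + by left; rewrite !inE eqxx orbT.
  + by right; exists x; rewrite ?inE ?eqxx.
  by right; exists y; rewrite ?inE ?eqxx ?orbT.
- move=> D HD; case E: #|D| => [|[|m]] //.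
    have D0 : D = set0 by apply/eqP; rewrite -cards_eq0 E.
    subst D.
    by case: (HD ord0) => [|[z]]; rewrite inE.
  move/eqP/cards1P: E => [z Dz]; subst D.
  have : (z, z) \in [set p | itm false H p && (#|miss H p| == 0)].
    rewrite inE /itm /= eqxx /= cards_eq0; apply/eqP/setP => w; rewrite !inE.
    apply: negbTE; apply/negP => /and4P [wz _ nH _].
    case: (HD w) => [|[u0]]; rewrite inE; first by rewrite (negbTE wz).
    by move=> /eqP -> Hzw; rewrite Hzw in nH.
  move: DHF; rewrite /Dk => /eqP; rewrite cards_eq0 => /eqP ->; by rewrite inE.
- exists x, y => -[|a [|b [|c p]]] //=.
  + by move=> _ E; move: xy; rewrite E eqxx.
  + by move=> + E; rewrite E /compl_graph Hxy andbF.
  + rewrite /compl_graph => /and3P [/andP [xa nHxa] /andP [ab nHab] _] E; subst b.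
    by case/or4P: (m0' a) => [/eqP E|/eqP E|Hw|Hw]; move: xa ab nHxa nHab;
       rewrite ?E ?eqxx ?Hw ?(symH a y) ?Hw //= ?andbF.
Qed.
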